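(* Let $\mathbb{H}$ be a Hilbert space with norm $\|\cdot\|$ and let $\mathcal{D}=\{\phi_j\}_{j\in\mathbb{N}^*}$ be an orthonormal basis of $\mathbb{H}$; set $\mathcal{D}_p=\{\phi_1,\dots,\phi_p\}$. Let $1<q<2$, $r>0$, $R>0$ and $f\in w\mathcal{L}_q(R)\cap\mathcal{B}^r_{2,\infty}(R)$. For $p\in\mathbb{N}^*$ and $\beta>0$ let $$f_{p,\beta}=\arg\min_{h\in\mathcal{L}_1(\mathcal{D}_p)}\big(\|f-h\|^2+\beta\|h\|_{\mathcal{L}_1(\mathcal{D}_p)}\big).$$ Then there exists $C_q>0$ depending only on $q$ such that for all $p\in\mathbb{N}^*$ and $\beta>0$, $$\|f_{p,\beta}\|_{\mathcal{L}_1(\mathcal{D}_p)}\le C_qR^q\beta^{1-q}\quad\text{and}\quad\|f-f_{p,\beta}\|\le R(p+1)^{-r}+\sqrt{C_q}\,R^{q/2}\beta^{1-q/2}.$$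
   Context: $\mathcal{L}_1(\mathcal{D}_p)$ is the span of $\phi_1,\dots,\phi_p$ with norm $\|h\|_{\mathcal{L}_1(\mathcal{D}_p)}=\inf\{\sum_{j=1}^p|\theta_j|:h=\sum_j\theta_j\phi_j\}$. Writing $g=\sum_{j\ge1}\theta_j\phi_j$: $g\in\mathcal{B}^r_{2,\infty}(R)$ iff $\sup_{J\in\mathbb{N}^*}\big(J^{2r}\sum_{j\ge J}\theta_j^2\big)\le R^2$; $g\in w\mathcal{L}_q(R)$ iff $\sup_{\eta>0}\big(\eta^q\sum_{j\ge1}\mathbf{1}\{|\theta_j|>\eta\}\big)\le R^q$. *)

(* Defs.v *)
From Stdlib Require Import Reals Lra.
From Coquelicot Require Import Coquelicot.
Open Scope R_scope.

(* The separable real Hilbert space H with orthonormal basis (phi_j)_{j>=1}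
   is represented by coordinates: an element g = sum_{j>=1} theta_j phi_j is
   the sequence theta : nat -> R, where only the indices j >= 1 matter
   (theta 0 is ignored). *)

Definition in_H (theta : nat -> R) : Prop :=
  ex_series (fun k => (theta (S k))²).

Definition Hnorm2 (theta : nat -> R) : R :=
  Series (fun k => (theta (S k))²).

Definition Hnorm (theta : nat -> R) : R := sqrt (Hnorm2 theta).

Definition Hsub (f h : nat -> R) : nat -> R := fun j => f j - h j.

Definition in_span (p : nat) (a : nat -> R) : Prop :=
  forall j, (1 <= j <= p)%nat \/ a j = 0.

(* ||h||_{L1(D_p)} = inf { sum_j |theta_j| : h = sum_{j<=p} theta_j phi_j };
   since D_p is orthonormal the representation is unique, so this is
   sum_{j=1}^p |a_j|. *)
Definition L1norm (p : nat) (a : nat -> R) : R :=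
  sum_n_m (fun j => Rabs (a j)) 1 p.

Definition besov (r Rad : R) (theta : nat -> R) : Prop :=
  forall J : nat, (1 <= J)%nat ->
    Rpower (INR J) (2 * r) * Series (fun k => (theta (J + k)%nat)²) <= Rad².

Definition count_big (eta : R) (theta : nat -> R) (n : nat) : R :=
  sum_n_m (fun j => if Rlt_dec eta (Rabs (theta j)) then 1 else 0) 1 n.

(* g in wL_q(R) : sup_{eta>0} eta^q #{j>=1 : |theta_j| > eta} <= R^q.
   The (possibly infinite) count is the increasing limit of the counts over
   {1,...,n}, so the bound is stated for every n. *)
Definition weakLq (q Rad : R) (theta : nat -> R) : Prop :=
  forall eta : R, 0 < eta -> forall n : nat,
    Rpower eta q * count_big eta theta n <= Rpower Rad q.

Definition objective (p : nat) (beta : R) (f h : nat -> R) : R :=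
  Hnorm2 (Hsub f h) + beta * L1norm p h.

Definition is_argmin (p : nat) (beta : R) (f h : nat -> R) : Prop :=
  in_span p h /\
  forall g, in_span p g -> objective p beta f h <= objective p beta f g.

(* Main.v *)
Require Import Defs.
From Stdlib Require Import Reals Lra Lia Arith Bool.
From Coquelicot Require Import Coquelicot.
Open Scope R_scope.

Lemma two_pow_big (M : R) : exists n : nat, M < 2 ^ n.
Proof.
  destruct (Pow_x_infinity 2 ltac:(rewrite Rabs_pos_eq; lra) (M + 1)) as [N HN].
  exists N. specialize (HN N (le_n _)).
  rewrite Rabs_pos_eq in HN by (apply pow_le; lra). lra.
Qed.

Lemma sum_term_le (a : nat -> R) (n m j : nat) :
  (forall k, 0 <= a k) -> (n <= j <= m)%nat -> a j <= sum_n_m a n m.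
Proof.
  intros Ha Hj. induction m as [|m IH].
  - assert (j = 0%nat /\ n = 0%nat) as [-> ->] by lia. rewrite sum_n_n. lra.
  - destruct (Nat.eq_dec j (S m)) as [->|Hne].
    + rewrite sum_n_Sm by lia. change (plus ?x ?y) with (x + y).
      destruct (le_lt_dec n m).
      * assert (0 <= sum_n_m a n m).
        { apply Rle_trans with (sum_n_m (fun _ => 0) n m).
          rewrite sum_n_m_const; lra. apply sum_n_m_le; auto. }
        lra.
      * rewrite sum_n_m_zero by lia. change (@zero R_AbelianMonoid) with 0. lra.
    + rewrite sum_n_Sm by lia. change (plus ?x ?y) with (x + y).
      specialize (IH ltac:(lia)). specialize (Ha (S m)). lra.
Qed.

Lemma sum_nonneg (a : nat -> R) (n m : nat) :
  (forall k, 0 <= a k) -> 0 <= sum_n_m a n m.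
Proof.
  intros Ha. apply Rle_trans with (sum_n_m (fun _ => 0) n m).
  rewrite sum_n_m_const; lra. apply sum_n_m_le; auto.
Qed.

Lemma sum_swap (A : nat -> nat -> R) (p K : nat) :
  sum_n_m (fun j => sum_n_m (fun k => A j k) 0 K) 1 p =
  sum_n_m (fun k => sum_n_m (fun j => A j k) 1 p) 0 K.
Proof.
  induction p as [|p IH].
  - rewrite sum_n_m_zero by lia.
    rewrite (sum_n_m_ext _ (fun _ => zero)).
    + now rewrite sum_n_m_const_zero.
    + intros k. now rewrite sum_n_m_zero by lia.
  - rewrite sum_n_Sm by lia. rewrite IH.
    rewrite <- sum_n_m_plus. apply sum_n_m_ext. intros k.
    rewrite (sum_n_Sm _ 1 p) by lia. reflexivity.
Qed.

Lemma sum_mult_l (c : R) (u : nat -> R) (n m : nat) :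
  sum_n_m (fun k => c * u k) n m = c * sum_n_m u n m.
Proof. exact (sum_n_m_mult_l c u n m). Qed.

Lemma sum_plus (u v : nat -> R) (n m : nat) :
  sum_n_m (fun k => u k + v k) n m = sum_n_m u n m + sum_n_m v n m.
Proof. exact (sum_n_m_plus u v n m). Qed.

Lemma geom_le (r : R) (K : nat) : 0 <= r < 1 ->
  sum_n_m (fun k => r ^ k) 0 K <= / (1 - r).
Proof.
  intros Hr. change (sum_n_m (fun k => r ^ k) 0 K) with (sum_n (fun k => r^k) K).
  rewrite sum_n_Reals, tech3 by lra.
  assert (0 <= r ^ S K) by (apply pow_le; lra).
  unfold Rdiv. rewrite <- (Rmult_1_l (/ (1 - r))) at 2. apply Rmult_le_compat_r. apply Rlt_le, Rinv_0_lt_compat; lra. lra.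
Qed.
Definition soft (t x : R) : R :=
  if Rle_dec x t then (if Rle_dec (-t) x then 0 else x + t) else x - t.
Definition posp (z : R) : R := Rmax z 0.
Definition ind (s x : R) : R := if Rlt_dec s x then 1 else 0.

Lemma soft_gap (t x c : R) : 0 < t ->
  (x - soft t x)^2 + 2*t*Rabs (soft t x) + (c - soft t x)^2 <= (x - c)^2 + 2*t*Rabs c.
Proof.
  intros Ht. unfold soft.
  destruct (Rle_dec x t); [destruct (Rle_dec (-t) x)|];
  unfold Rabs; repeat destruct Rcase_abs; nra.
Qed.

Lemma soft_abs (t x : R) : 0 < t -> Rabs (soft t x) <= posp (Rabs x - t).
Proof.
  intros Ht. unfold soft, posp, Rmax.
  destruct (Rle_dec x t); [destruct (Rle_dec (-t) x)|];
  destruct Rle_dec; unfold Rabs in *; repeat destruct Rcase_abs; lra.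
Qed.

Lemma soft_res (t x : R) : 0 < t -> (x - soft t x)^2 <= (Rmin (Rabs x) t)^2.
Proof.
  intros Ht. unfold soft, Rmin.
  destruct (Rle_dec x t); [destruct (Rle_dec (-t) x)|];
  destruct Rle_dec; unfold Rabs in *; repeat destruct Rcase_abs; nra.
Qed.

Lemma stepA (u x : R) : 0 <= u -> posp (x - u) <= u * ind u x + posp (x - 2 * u).
Proof.
  intros Hu. unfold posp, ind, Rmax. repeat destruct Rle_dec; destruct Rlt_dec; lra.
Qed.

Lemma GA (t x : R) (K : nat) : 0 <= t ->
  posp (x - t) <= sum_n_m (fun k => 2^k * t * ind (2^k*t) x) 0 K + posp (x - 2^(S K) * t).
Proof.
  intros Ht. induction K as [|K IH].
  - rewrite sum_n_n. simpl. replace (2 * 1 * t) with (2*t) by ring.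
    replace (1 * t) with t by ring. now apply stepA.
  - rewrite sum_n_Sm by lia. change (plus ?a ?b) with (a + b).
    assert (0 <= 2 ^ S K * t) by (apply Rmult_le_pos; [apply pow_le|]; lra).
    pose proof (stepA (2^S K * t) x H).
    replace (2 ^ S (S K) * t) with (2 * (2^S K * t)) by (simpl; ring). lra.
Qed.

Lemma stepB (u x : R) : 0 <= u -> 0 <= x ->
  (Rmin x u)^2 <= u^2 * ind (u/2) x + (Rmin x (u/2))^2.
Proof.
  intros Hu Hx. unfold Rmin, ind. repeat destruct Rle_dec; destruct Rlt_dec; nra.
Qed.

Lemma GB (t x : R) (K : nat) : 0 <= t -> 0 <= x ->
  (Rmin x t)^2 <= sum_n_m (fun k => (t / 2^k)^2 * ind (t / 2^(S k)) x) 0 K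
                  + (Rmin x (t / 2^(S K)))^2.
Proof.
  intros Ht Hx. induction K as [|K IH].
  - rewrite sum_n_n. simpl. replace (t / 1) with t by field.
    replace (t / (2 * 1)) with (t/2) by field. now apply stepB.
  - rewrite sum_n_Sm by lia. change (plus ?a ?b) with (a + b).
    assert (0 <= t / 2 ^ S K) by (apply Rmult_le_pos; [|apply Rlt_le, Rinv_0_lt_compat, pow_lt]; lra).
    pose proof (stepB (t / 2^S K) x H Hx).
    replace (t / 2 ^ S (S K)) with (t / 2 ^ S K / 2) by (simpl; field; apply pow_nonzero; lra). lra.
Qed.

Lemma rp_pos (x y : R) : 0 < Rpower x y.
Proof. unfold Rpower. apply exp_pos. Qed.

Lemma rp_pow2 (q : R) (k : nat) : Rpower (2^k) q = (Rpower 2 q)^k.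
Proof.
  rewrite <- (Rpower_pow k 2) by lra. rewrite Rpower_mult, Rmult_comm, <- Rpower_mult.
  apply Rpower_pow, rp_pos.
Qed.

Lemma le_div_helper (C X Y : R) : 0 < Y -> C * Y <= X -> C <= X / Y.
Proof.
  intros HY H. apply (Rmult_le_reg_r Y); auto. unfold Rdiv. rewrite Rmult_assoc, Rinv_l by lra. lra.
Qed.

Lemma count_bound (q Rad : R) (f : nat -> R) (p : nat) (s : R) :
  weakLq q Rad f -> 0 < s -> count_big s f p <= Rpower Rad q / Rpower s q.
Proof.
  intros W Hs. apply le_div_helper. apply rp_pos. rewrite Rmult_comm. now apply W.
Qed.

Lemma count_nonneg (s : R) (f : nat -> R) (p : nat) : 0 <= count_big s f p.
Proof. unfold count_big. apply sum_nonneg. intros k. destruct Rlt_dec; lra. Qed.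

Lemma boundA (q Rad : R) (f : nat -> R) (p : nat) (t : R) :
  1 < q -> weakLq q Rad f -> 0 < t ->
  sum_n_m (fun j => posp (Rabs (f j) - t)) 1 p <=
  Rpower Rad q * (t / Rpower t q) / (1 - 2 / Rpower 2 q).
Proof.
  intros Hq W Ht.
  set (a := Rpower 2 q).
  assert (Ha : 2 < a).
  { unfold a. rewrite <- (Rpower_1 2) at 1 by lra. apply Rpower_lt; lra. }
  set (Ssum := sum_n_m (fun j => Rabs (f j)) 1 p).
  destruct (two_pow_big (Ssum / t)) as [n Hn].
  assert (HSn : Ssum < 2^n * t).
  { apply (Rmult_lt_compat_r t) in Hn; auto. unfold Rdiv in Hn.
    rewrite Rmult_assoc, Rinv_l, Rmult_1_r in Hn by lra. exact Hn. }
  assert (H1 : sum_n_m (fun j => posp (Rabs (f j) - t)) 1 p <=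
     sum_n_m (fun j => sum_n_m (fun k => 2^k * t * ind (2^k*t) (Rabs (f j))) 0 n
                        + posp (Rabs (f j) - 2^(Datatypes.S n) * t)) 1 p).
  { apply sum_n_m_le. intros j. apply GA; lra. }
  rewrite sum_plus, sum_swap in H1.
  assert (Htail : sum_n_m (fun j => posp (Rabs (f j) - 2 ^ Datatypes.S n * t)) 1 p = 0).
  { rewrite (sum_n_m_ext_loc _ (fun _ => 0)).
    { rewrite sum_n_m_const. apply Rmult_0_r. }
    intros j Hj. unfold posp, Rmax.
      assert (Rabs (f j) <= Ssum) by (apply (sum_term_le (fun j => Rabs (f j))); [intros; apply Rabs_pos| lia]).
      assert (2^n * t <= 2 ^ Datatypes.S n * t).
      { apply Rmult_le_compat_r; [lra|]. simpl. assert (0 <= 2^n) by (apply pow_le; lra). lra. }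
      destruct Rle_dec; lra. }
  rewrite Htail, Rplus_0_r in H1.
  eapply Rle_trans; [exact H1|].
  apply Rle_trans with (sum_n_m (fun k => Rpower Rad q * (t / Rpower t q) * (2 / a)^k) 0 n).
  - apply sum_n_m_le. intros k.
    change (sum_n_m (fun j => 2 ^ k * t * ind (2 ^ k * t) (Rabs (f j))) 1 p)
      with (sum_n_m (fun j => 2 ^ k * t * (fun j => ind (2 ^ k * t) (Rabs (f j))) j) 1 p).
    rewrite sum_mult_l.
    assert (Hpk : 0 < 2^k) by (apply pow_lt; lra).
    assert (Hc : sum_n_m (fun j => ind (2 ^ k * t) (Rabs (f j))) 1 p <=
                 Rpower Rad q / (a^k * Rpower t q)).
    { assert (E : a^k * Rpower t q = Rpower (2^k * t) q).
      { unfold a. rewrite <- rp_pow2. apply Rpower_mult_distr; lra. }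
      rewrite E. apply (count_bound q Rad f p). auto. apply Rmult_lt_0_compat; lra. }
    assert (Hak : 0 < a^k) by (apply pow_lt; lra).
    pose proof (rp_pos t q).
    replace (Rpower Rad q * (t / Rpower t q) * (2 / a) ^ k)
      with (2^k * t * (Rpower Rad q / (a^k * Rpower t q))).
    + apply Rmult_le_compat_l. apply Rmult_le_pos; lra. exact Hc.
    + unfold Rdiv. rewrite Rpow_mult_distr, pow_inv. field. lra.
  - rewrite sum_mult_l. unfold Rdiv at 3. 
    apply Rmult_le_compat_l.
    + apply Rmult_le_pos. apply Rlt_le, rp_pos. apply Rmult_le_pos. lra. apply Rlt_le, Rinv_0_lt_compat, rp_pos.
    + apply geom_le. split. apply Rmult_le_pos. lra. apply Rlt_le, Rinv_0_lt_compat. lra.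
      apply (Rmult_lt_reg_r a). lra. unfold Rdiv. rewrite Rmult_assoc, Rinv_l; lra.
Qed.

Lemma boundB (q Rad : R) (f : nat -> R) (p : nat) (t : R) :
  q < 2 -> weakLq q Rad f -> 0 < t ->
  sum_n_m (fun j => (Rmin (Rabs (f j)) t)^2) 1 p <=
  Rpower Rad q * (t^2 / Rpower t q) * Rpower 2 q / (1 - Rpower 2 q / 4).
Proof.
  intros Hq W Ht.
  set (a := Rpower 2 q).
  assert (Ha : a < 4).
  { unfold a. replace 4 with (Rpower 2 2). apply Rpower_lt; lra.
    replace 2 with (INR 2) at 2 by (simpl; lra). rewrite Rpower_pow by lra. simpl; lra. }
  assert (Ha0 : 0 < a) by apply rp_pos.
  set (G := Rpower Rad q * (t^2 / Rpower t q) * a / (1 - a / 4)).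
  set (Ssum := sum_n_m (fun j => Rabs (f j)) 1 p).
  assert (HS0 : 0 <= Ssum) by (apply sum_nonneg; intros; apply Rabs_pos).
  assert (Hall : forall K, sum_n_m (fun j => (Rmin (Rabs (f j)) t)^2) 1 p <=
                           G + t / 2^(S K) * Ssum).
  { intros K.
    assert (H1 : sum_n_m (fun j => (Rmin (Rabs (f j)) t)^2) 1 p <=
       sum_n_m (fun j => sum_n_m (fun k => (t / 2^k)^2 * ind (t / 2^(S k)) (Rabs (f j))) 0 K
                        + (Rmin (Rabs (f j)) (t / 2^(S K)))^2) 1 p).
    { apply sum_n_m_le. intros j. apply GB. lra. apply Rabs_pos. }
    rewrite sum_plus, sum_swap in H1.
    assert (Hu : 0 < t / 2 ^ S K) by (apply Rmult_lt_0_compat; [lra|apply Rinv_0_lt_compat, pow_lt; lra]).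
    assert (Htail : sum_n_m (fun j => (Rmin (Rabs (f j)) (t / 2^(S K)))^2) 1 p <= t / 2^(S K) * Ssum).
    { unfold Ssum. rewrite <- sum_mult_l. apply sum_n_m_le. intros j.
      pose proof (Rabs_pos (f j)). unfold Rmin. destruct Rle_dec; nra. }
    assert (Hmain : sum_n_m (fun k => sum_n_m (fun j => (t / 2 ^ k) ^ 2 * ind (t / 2 ^ S k) (Rabs (f j))) 1 p) 0 K <= G).
    { apply Rle_trans with (sum_n_m (fun k => Rpower Rad q * (t^2 / Rpower t q) * a * (a / 4)^k) 0 K).
      - apply sum_n_m_le. intros k.
        change (sum_n_m (fun j => (t / 2 ^ k) ^ 2 * ind (t / 2 ^ S k) (Rabs (f j))) 1 p)
          with (sum_n_m (fun j => (t / 2 ^ k) ^ 2 * (fun j => ind (t / 2 ^ S k) (Rabs (f j))) j) 1 p).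
        rewrite sum_mult_l.
        assert (Hpk : 0 < 2^k) by (apply pow_lt; lra).
        assert (Hak : 0 < a^k) by (apply pow_lt; lra).
        pose proof (rp_pos t q) as Htq.
        assert (Hc : sum_n_m (fun j => ind (t / 2 ^ S k) (Rabs (f j))) 1 p <=
                     Rpower Rad q / (Rpower t q / a^(S k))).
        { assert (E : Rpower t q / a^(S k) = Rpower (t / 2^(S k)) q).
          { unfold a. rewrite <- rp_pow2.
            assert (0 < 2 ^ S k) by (apply pow_lt; lra).
            assert (E2 : Rpower (t / 2 ^ S k) q * Rpower (2^S k) q = Rpower t q).
            { rewrite Rpower_mult_distr; try lra. f_equal. field. lra. apply Rmult_lt_0_compat; [lra|]. apply Rinv_0_lt_compat; lra. }
            rewrite <- E2. field. apply Rgt_not_eq, rp_pos. }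
          rewrite E. apply (count_bound q Rad f p). auto. apply Rmult_lt_0_compat; [lra|]. apply Rinv_0_lt_compat, pow_lt; lra. }
        replace (Rpower Rad q * (t ^ 2 / Rpower t q) * a * (a / 4) ^ k)
          with ((t / 2^k)^2 * (Rpower Rad q / (Rpower t q / a^(S k)))).
        + apply Rmult_le_compat_l. apply pow2_ge_0. exact Hc.
        + replace 4 with (2*2) by ring. unfold Rdiv. rewrite !Rpow_mult_distr, !pow_inv.
          rewrite Rpow_mult_distr. simpl. field. repeat split; lra.
      - rewrite sum_mult_l. unfold G. unfold Rdiv at 3.
        apply Rmult_le_compat_l.
        + apply Rmult_le_pos; [|lra]. apply Rmult_le_pos. apply Rlt_le, rp_pos.
          apply Rmult_le_pos. apply pow2_ge_0. apply Rlt_le, Rinv_0_lt_compat, rp_pos.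
        + apply geom_le. lra. }
    lra. }
  destruct (Rle_or_lt (sum_n_m (fun j => (Rmin (Rabs (f j)) t)^2) 1 p) G) as [Hle|Hgt]; [exact Hle|].
  exfalso.
  set (eps := sum_n_m (fun j => (Rmin (Rabs (f j)) t)^2) 1 p - G) in *.
  assert (He : 0 < eps) by (unfold eps; lra).
  destruct (two_pow_big (t * Ssum / eps)) as [n Hn].
  specialize (Hall n).
  assert (Hpn : 0 < 2^n) by (apply pow_lt; lra).
  assert (t / 2 ^ S n * Ssum < eps).
  { simpl. apply (Rmult_lt_compat_r eps) in Hn; auto.
    unfold Rdiv in *. rewrite Rmult_assoc, Rinv_l, Rmult_1_r in Hn by lra.
    apply (Rmult_lt_reg_r (2 * 2^n)). lra.
    replace (t * / (2 * 2 ^ n) * Ssum * (2 * 2 ^ n)) with (t * Ssum) by (field; lra).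
    nra. }
  unfold eps in *. lra.
Qed.

Lemma decomp (f h : nat -> R) (p : nat) :
  in_H f -> in_span p h -> (1 <= p)%nat ->
  Hnorm2 (Hsub f h) = sum_n_m (fun j => (f j - h j)²) 1 p
                      + Series (fun k => (f (p + 1 + k)%nat)²).
Proof.
  intros HH Hs Hp. unfold Hnorm2, Hsub.
  set (a := fun k => (f (S k) - h (S k))²).
  assert (Htl : forall k, a (p + k)%nat = (f (p + 1 + k)%nat)²).
  { intros k. unfold a. destruct (Hs (S (p + k))) as [Hc|Hc]; [lia|].
    rewrite Hc, Rminus_0_r. do 2 f_equal. lia. }
  assert (Hex : ex_series a).
  { apply (ex_series_incr_n a p). apply (ex_series_ext (fun k => (f (S (p + k)))²)).
    - intros k. rewrite Htl. do 2 f_equal. lia.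
    - apply (ex_series_incr_n (fun k => (f (S k))²) p) in HH. exact HH. }
  change (Series (fun k => (f (S k) - h (S k))²)) with (Series a).
  rewrite (Series_incr_n a p) by (auto; lia).
  rewrite (Series_ext _ _ Htl). f_equal.
  rewrite <- sum_n_Reals. unfold sum_n.
  destruct p as [|p']; [lia|]. simpl Init.Nat.pred.
  rewrite <- (sum_n_m_S (fun j => (f j - h j)²)). reflexivity.
Qed.

Lemma tail_bound (f : nat -> R) (r Rad : R) (p : nat) :
  0 < Rad -> besov r Rad f ->
  sqrt (Series (fun k => (f (p + 1 + k)%nat)²)) <= Rad * Rpower (INR (p + 1)) (- r).
Proof.
  intros HR B. specialize (B (p + 1)%nat ltac:(lia)).
  assert (Hp : 0 < INR (p + 1)) by (apply lt_0_INR; lia).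
  set (T := Series _) in *.
  assert (HP : 0 < Rpower (INR (p + 1)) (2 * r)) by apply rp_pos.
  assert (E : Rpower (INR (p + 1)) (- r) ^ 2 = / Rpower (INR (p + 1)) (2 * r)).
  { rewrite <- Rpower_pow by apply rp_pos. rewrite Rpower_mult.
    replace (- r * INR 2) with (- (2 * r)) by (simpl; ring). apply Rpower_Ropp. }
  assert (Hpos : 0 <= Rad * Rpower (INR (p + 1)) (- r)).
  { apply Rmult_le_pos. lra. apply Rlt_le, rp_pos. }
  rewrite <- (sqrt_pow2 _ Hpos). apply sqrt_le_1_alt.
  rewrite Rpow_mult_distr, E. unfold Rsqr in B.
  apply (Rmult_le_reg_l (Rpower (INR (p + 1)) (2 * r))); auto.
  replace (Rpower (INR (p + 1)) (2 * r) * (Rad ^ 2 * / Rpower (INR (p + 1)) (2 * r)))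
    with (Rad * Rad) by (simpl; field; lra). exact B.
Qed.

Lemma sqrt_add_le (x y : R) : 0 <= x -> 0 <= y -> sqrt (x + y) <= sqrt x + sqrt y.
Proof.
  intros Hx Hy. pose proof (sqrt_pos x). pose proof (sqrt_pos y).
  rewrite <- (sqrt_pow2 (sqrt x + sqrt y)) by lra. apply sqrt_le_1_alt.
  replace ((sqrt x + sqrt y)^2) with (sqrt x * sqrt x + sqrt y * sqrt y + 2 * sqrt x * sqrt y) by ring.
  rewrite !sqrt_sqrt by lra. nra.
Qed.

Lemma rp_sq (x y : R) : Rpower x y ^ 2 = Rpower x (2 * y).
Proof.
  rewrite <- Rpower_pow by apply rp_pos. rewrite Rpower_mult. f_equal. simpl. ring.
Qed.

Lemma rp_split (b y : R) (n : nat) : 0 < b -> Rpower b (INR n - y) = b ^ n / Rpower b y.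
Proof.
  intros Hb. unfold Rminus. rewrite Rpower_plus, Rpower_pow, Rpower_Ropp by auto. reflexivity.
Qed.

Theorem lemma8p5 :
  forall q : R, 1 < q -> q < 2 ->
  exists Cq : R, 0 < Cq /\
    forall (r Rad : R) (f : nat -> R),
      0 < r -> 0 < Rad ->
      in_H f -> weakLq q Rad f -> besov r Rad f ->
      forall (p : nat) (beta : R) (fpb : nat -> R),
        (1 <= p)%nat -> 0 < beta ->
        is_argmin p beta f fpb ->
        L1norm p fpb <= Cq * Rpower Rad q * Rpower beta (1 - q) /\
        Hnorm (Hsub f fpb) <=
          Rad * Rpower (INR (p + 1)) (- r)
          + sqrt Cq * Rpower Rad (q / 2) * Rpower beta (1 - q / 2).
Proof.
  intros q Hq1 Hq2.
  set (a := Rpower 2 q).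
  assert (Ha2 : 2 < a).
  { unfold a. rewrite <- (Rpower_1 2) at 1 by lra. apply Rpower_lt; lra. }
  assert (Ha4 : a < 4).
  { unfold a. replace 4 with (Rpower 2 2). apply Rpower_lt; lra.
    replace 2 with (INR 2) at 2 by (simpl; lra). rewrite Rpower_pow by lra. simpl; lra. }
  set (C1 := (a / 2) / (1 - 2 / a)).
  set (C2 := (a * a / 4) / (1 - a / 4)).
  assert (HC1 : 0 < C1).
  { unfold C1. apply Rdiv_lt_0_compat. lra. 
    apply (Rmult_lt_reg_r a). lra. unfold Rdiv. rewrite Rmult_minus_distr_r, Rmult_assoc, Rinv_l; lra. }
  assert (HC2 : 0 < C2).
  { unfold C2. apply Rdiv_lt_0_compat. nra. lra. }
  exists (C1 + C2). split; [lra|].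
  intros r Rad f Hr HR HH W B p beta fpb Hp Hb [Hspan Hmin].
  set (t := beta / 2).
  assert (Ht : 0 < t) by (unfold t; lra).
  set (RQ := Rpower Rad q).
  assert (HRQ : 0 < RQ) by apply rp_pos.
  set (bq := Rpower beta q).
  assert (Hbq : 0 < bq) by apply rp_pos.
  assert (Etq : Rpower t q = bq / a).
  { unfold bq, a. replace beta with (t * 2) at 1 by (unfold t; field).
    rewrite <- (Rpower_mult_distr t 2) by lra.
    field. apply Rgt_not_eq, rp_pos. }
  set (s := fun j => if (Nat.leb 1 j && Nat.leb j p)%bool then soft t (f j) else 0).
  assert (Hss : in_span p s).
  { intros j. unfold s. destruct (Nat.leb 1 j) eqn:E1; destruct (Nat.leb j p) eqn:E2; simpl;
    try (right; reflexivity). left. apply Nat.leb_le in E1, E2. lia. }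
  specialize (Hmin s Hss). unfold objective, L1norm in Hmin.
  rewrite (decomp f fpb p), (decomp f s p) in Hmin by auto.
  set (T := Series _) in Hmin.
  assert (Hpt : forall j, (f j - s j)² + beta * Rabs (s j) + (fpb j - s j)² <=
                          (f j - fpb j)² + beta * Rabs (fpb j)).
  { intros j. unfold s. destruct (Nat.leb 1 j && Nat.leb j p)%bool eqn:E.
    - pose proof (soft_gap t (f j) (fpb j) Ht). unfold Rsqr. unfold t in *.
      replace (2 * (beta / 2)) with beta in H by field. nra.
    - destruct (Hspan j) as [Hj|Hj].
      + apply andb_false_iff in E. destruct E as [E|E]; apply Nat.leb_gt in E; lia.
      + rewrite Hj, Rabs_R0. unfold Rsqr. nra. }
  assert (Hsum : sum_n_m (fun j => (fpb j - s j)²) 1 p <= 0).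
  { pose proof (sum_n_m_le _ _ 1 p Hpt) as H.
    rewrite !sum_plus in H.
    rewrite (sum_mult_l beta (fun j => Rabs (s j))) in H.
    rewrite (sum_mult_l beta (fun j => Rabs (fpb j))) in H.
    lra. }
  assert (Heq : forall j, (1 <= j <= p)%nat -> fpb j = soft t (f j)).
  { intros j Hj.
    pose proof (sum_term_le (fun j => (fpb j - s j)²) 1 p j (fun k => Rle_0_sqr _) Hj) as H.
    cbv beta in H.
    assert (E : (Nat.leb 1 j && Nat.leb j p)%bool = true).
    { apply andb_true_iff. split; apply Nat.leb_le; lia. }
    assert (Es : s j = soft t (f j)) by (unfold s; now rewrite E).
    rewrite Es in H. assert (Hz : (fpb j - soft t (f j))² <= 0) by lra. unfold Rsqr in Hz. nra. }
  split.
  -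
    unfold L1norm. rewrite (sum_n_m_ext_loc _ (fun j => Rabs (soft t (f j)))) by
      (intros j Hj; now rewrite Heq).
    eapply Rle_trans. { apply sum_n_m_le. intros j. apply (soft_abs t (f j) Ht). }
    eapply Rle_trans. { apply (boundA q Rad f p t Hq1 W Ht). }
    fold RQ a. rewrite Etq.
    replace (1 - q) with (INR 1 - q) by (simpl; ring).
    rewrite rp_split by lra. fold bq. simpl pow.
    replace (RQ * (t / (bq / a)) / (1 - 2 / a)) with (C1 * RQ * (beta * 1 / bq)).
    + apply Rmult_le_compat_r. apply Rlt_le. apply Rdiv_lt_0_compat; lra.
      apply Rmult_le_compat_r; lra.
    + unfold C1, t. field. repeat split; try lra.
  -
    unfold Hnorm. rewrite (decomp f fpb p) by auto. fold T.
    assert (HS0 : 0 <= sum_n_m (fun j => (f j - fpb j)²) 1 p).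
    { apply sum_nonneg. intros; apply Rle_0_sqr. }
    assert (HT0 : 0 <= T).
    { unfold T. apply Rle_trans with (Series (fun k => 0 * (f (p + 1 + k)%nat)²)).
      { rewrite Series_scal_l. lra. }
      apply Series_le.
      - intros n; pose proof (Rle_0_sqr (f (p + 1 + n)%nat)); split; lra.
      - apply (ex_series_ext (fun k => (fun k => (f (S k))²) (p + k)%nat)).
        + intros k. simpl. do 2 f_equal. lia.
        + now apply (ex_series_incr_n (fun k => (f (S k))²) p). }
    rewrite Rplus_comm. eapply Rle_trans. { apply sqrt_add_le; auto. }
    apply Rplus_le_compat. { apply tail_bound; auto. }
    set (X := sqrt (C1 + C2) * Rpower Rad (q / 2) * Rpower beta (1 - q / 2)).
    assert (HX : 0 <= X).
    { unfold X. apply Rmult_le_pos. apply Rmult_le_pos. apply sqrt_pos. apply Rlt_le, rp_pos.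
      apply Rlt_le, rp_pos. }
    rewrite <- (sqrt_pow2 X HX). apply sqrt_le_1_alt.
    assert (EX : X ^ 2 = (C1 + C2) * RQ * (beta ^ 2 / bq)).
    { unfold X. rewrite !Rpow_mult_distr, !rp_sq.
      replace (sqrt (C1 + C2) ^ 2) with (C1 + C2) by (rewrite pow2_sqrt; lra).
      replace (2 * (q / 2)) with q by field.
      replace (2 * (1 - q / 2)) with (INR 2 - q) by (simpl; field).
      rewrite rp_split by lra. reflexivity. }
    rewrite EX.
    rewrite (sum_n_m_ext_loc _ (fun j => (f j - soft t (f j))²)) by
      (intros j Hj; now rewrite Heq).
    eapply Rle_trans. { apply sum_n_m_le. intros j.
      rewrite Rsqr_pow2. apply (soft_res t (f j) Ht). }
    eapply Rle_trans. { apply (boundB q Rad f p t Hq2 W Ht). }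
    fold RQ a. rewrite Etq.
    replace (RQ * (t ^ 2 / (bq / a)) * a / (1 - a / 4)) with (C2 * RQ * (beta ^ 2 / bq)).
    + apply Rmult_le_compat_r. apply Rlt_le. apply Rdiv_lt_0_compat; [|lra].
      apply pow_lt; lra.
      apply Rmult_le_compat_r; lra.
    + unfold C2, t. field. repeat split; try lra.
Qed.
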